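(* Consider the ternary hypothesis test on an observation vector $\mathbf{y}=(y_0,\dots,y_{N-1})\in\mathbb{R}^N$ with hypotheses $\mathcal{H}_0,\mathcal{H}_1,\mathcal{H}_2$ having probability densities $p(\mathbf{y};\mathcal{H}_0)$, $p(\mathbf{y};\mathcal{H}_1)$, $p(\mathbf{y};\mathcal{H}_2)$, and let $\alpha,\beta\in(0.5,1)$. The optimization problem $$\max_{\mathcal{R}_0,\mathcal{R}_1,\mathcal{R}_2}\Pr(\mathcal{H}_2|\mathcal{H}_2)\quad\text{s.t.}\quad \Pr(\mathcal{H}_0|\mathcal{H}_0)\ge\alpha,\ \Pr(\mathcal{H}_1|\mathcal{H}_1)\ge\beta$$ is equivalent to the optimization problem $$\max_{\mathcal{R}_0,\mathcal{R}_1,\mathcal{R}_2}\Pr(\mathcal{H}_2|\mathcal{H}_2)\quad\text{s.t.}\quad \Pr(\mathcal{H}_0|\mathcal{H}_0)=\alpha,\ \Pr(\mathcal{H}_1|\mathcal{H}_1)=\beta,$$ i.e., at the maximum of the first problem the two constraints hold with equality, so the two problems have the same optimal value.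
   Context: A decision rule is given by decision regions $\mathcal{R}_0,\mathcal{R}_1,\mathcal{R}_2\subseteq\mathbb{R}^N$ that are pairwise disjoint and whose union is $\mathbb{R}^N$; hypothesis $\mathcal{H}_i$ is declared when $\mathbf{y}\in\mathcal{R}_i$. For $i,j\in\{0,1,2\}$, $\Pr(\mathcal{H}_i|\mathcal{H}_j):=\int_{\mathcal{R}_i}p(\mathbf{y};\mathcal{H}_j)\,d\mathbf{y}$ denotes the probability of declaring $\mathcal{H}_i$ when $\mathcal{H}_j$ is true. *)

(* Defs.v *)
From HB Require Import structures.
From mathcomp Require Import all_boot all_order all_algebra.
From mathcomp Require Import all_classical all_reals all_analysis.
Set Implicit Arguments. Unset Strict Implicit. Unset Printing Implicit Defensive.
Import Order.TTheory GRing.Theory Num.Theory.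
Local Open Scope classical_set_scope.
Local Open Scope ring_scope.

(* Observation space R^N is represented as N.-tuple R, with the product
   (Borel) sigma-algebra generated by the coordinate maps. *)

(* mu is the Lebesgue measure on R^N: it gives every closed box its volume.
   (This characterizes Lebesgue measure on the Borel sets of R^N.) *)
Definition is_lebesgue_measure_N (R : realType) (N : nat)
    (mu : set (N.-tuple R) -> \bar R) : Prop :=
  forall a b : 'I_N -> R, (forall i, a i <= b i) ->
    mu [set x : N.-tuple R | forall i, a i <= tnth x i <= b i]
    = (\prod_(i < N) (b i - a i))%:E.

Definition is_density (R : realType) (N : nat)
    (mu : {measure set (N.-tuple R) -> \bar R}) (f : N.-tuple R -> R) : Prop :=
  measurable_fun setT f /\ (forall y, 0 <= f y) /\
  (\int[mu]_y (f y)%:E = 1)%E.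

Definition decision_rule (R : realType) (N : nat) (Rg : 'I_3 -> set (N.-tuple R)) : Prop :=
  (forall i, measurable (Rg i)) /\
  (forall i j, i != j -> Rg i `&` Rg j = set0) /\
  (\bigcup_(i in [set: 'I_3]) Rg i = setT).

Definition PrHH (R : realType) (N : nat) (mu : {measure set (N.-tuple R) -> \bar R})
    (p : 'I_3 -> N.-tuple R -> R) (Rg : 'I_3 -> set (N.-tuple R)) (i j : 'I_3) : \bar R :=
  (\int[mu]_(y in Rg i) (p j y)%:E)%E.

Definition H0 : 'I_3 := @Ordinal 3 0 isT.
Definition H1 : 'I_3 := @Ordinal 3 1 isT.
Definition H2 : 'I_3 := @Ordinal 3 2 isT.

Definition feasible_ineq (R : realType) (N : nat) (mu : {measure set (N.-tuple R) -> \bar R})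
    (p : 'I_3 -> N.-tuple R -> R) (alpha beta : R) : set ('I_3 -> set (N.-tuple R)) :=
  [set Rg | decision_rule Rg /\
     (alpha%:E <= PrHH mu p Rg H0 H0)%E /\ (beta%:E <= PrHH mu p Rg H1 H1)%E].

Definition feasible_eq (R : realType) (N : nat) (mu : {measure set (N.-tuple R) -> \bar R})
    (p : 'I_3 -> N.-tuple R -> R) (alpha beta : R) : set ('I_3 -> set (N.-tuple R)) :=
  [set Rg | decision_rule Rg /\
     PrHH mu p Rg H0 H0 = alpha%:E /\ PrHH mu p Rg H1 H1 = beta%:E].

(* Main.v *)
Require Import Defs.
From HB Require Import structures.
From mathcomp Require Import all_boot all_order all_algebra.
From mathcomp Require Import all_classical all_reals all_analysis.
From mathcomp Require Import lra.
Import Order.TTheory GRing.Theory Num.Theory.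
Local Open Scope classical_set_scope.
Local Open Scope ring_scope.

Section nonatomic.
Context d (T : measurableType d) (R : realType) (nu : {measure set T -> \bar R}) (h : T -> R).
Hypothesis mh : measurable_fun setT h.
Hypothesis nufin : (nu setT < +oo)%E.
Hypothesis nu_lvl : forall t, nu (h @^-1` [set t]) = 0%E.

Let mpre (B : set R) : measurable B -> measurable (h @^-1` B).
Proof. by move=> mB; rewrite -[_ @^-1` _]setTI; exact: mh. Qed.

Let mle t : measurable [set x | h x <= t].
Proof.
have -> : [set x | h x <= t] = h @^-1` [set` `]-oo, t]].
  by apply/seteqP; split => x /=; rewrite in_itv.
apply: mpre; exact: measurable_itv.
Qed.
Let mlt t : measurable [set x | h x < t].
Proof.
have -> : [set x | h x < t] = h @^-1` [set` `]-oo, t[].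
  by apply/seteqP; split => x /=; rewrite in_itv.
apply: mpre; exact: measurable_itv.
Qed.

Variable A : set T.
Hypothesis mA : measurable A.

Let G t := nu (A `&` [set x | h x <= t]).
Let mLe t : measurable (A `&` [set x | h x <= t]).
Proof. exact: measurableI. Qed.
Let mLt t : measurable (A `&` [set x | h x < t]).
Proof. exact: measurableI. Qed.

Let G_mono s t : s <= t -> (G s <= G t)%E.
Proof.
move=> st; apply: le_measure; rewrite ?inE //; try exact: measurableI.
by move=> x [Ax /= hs]; split => //; exact: le_trans st.
Qed.

Let G_eq t : G t = nu (A `&` [set x | h x < t]).
Proof.
rewrite /G.
have -> : A `&` [set x | h x <= t] =
   (A `&` [set x | h x < t]) `|` (A `&` h @^-1` [set t]).
  apply/seteqP; split => x /=.
    rewrite le_eqVlt => -[Ax /orP[/eqP->|->]]; by [right|left].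
  by move=> -[[Ax /ltW]|[Ax ->]].
rewrite measureU //; try exact: measurableI.
- have : (nu (A `&` h @^-1` [set t]) <= nu (h @^-1` [set t]))%E.
    by apply: le_measure; rewrite ?inE//; [apply: measurableI => //|]; apply: mpre; exact: measurable_set1.
  rewrite nu_lvl => H; rewrite -[X in _ = X]adde0; congr (_ + _); apply/le_anti; by rewrite H measure_ge0.
- apply: measurableI; [exact: mA|apply: mpre; exact: measurable_set1].
- apply/seteqP; split => x //= [[_ hlt] [_ heq]].
  by move: hlt; rewrite heq ltxx.
Qed.

Let nufinA B : measurable B -> (nu B < +oo)%E.
Proof. by move=> mB; apply: le_lt_trans nufin; apply: le_measure; rewrite ?inE. Qed.

Lemma nonatomic_split c : 0 <= c -> (c%:E <= nu A)%E ->
  exists S, measurable S /\ S `<=` A /\ nu S = c%:E.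
Proof.
move=> c0 cA.
have [/eqP eA|neA] := boolP (c%:E == nu A).
  by exists A; split => //; split.
have cltA : (c%:E < nu A)%E by rewrite lt_neqAle neA.
have [/eqP c00|cn0] := boolP (c == 0).
  by exists set0; split; [exact: measurable0 | split; [exact: sub0set | rewrite c00 measure0]].
have cpos : 0 < c by rewrite lt_neqAle eq_sym cn0.
have [t1 Ht1] : exists t, (G t <= c%:E)%E.
  apply: contrapT => /forallNP H.
  have H' t : (c%:E < G t)%E by rewrite ltNge; apply/negP; exact: H.
  pose F n := A `&` [set x | h x <= - n%:R].
  have mF n : measurable (F n) by exact: measurableI.
  have := @nonincreasing_cvg_mu _ _ _ nu F (nufinA _ (mF 0%N)) mF.
  have E0 : \bigcap_n F n = set0.
    apply/seteqP; split => x //= Hx.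
    have [Ax hx] := Hx (Num.bound `|h x|) I.
    have := archi_boundP (normr_ge0 (h x)).
    have := lerNnormlW (le_refl `|h x|).
    move: hx => /=; set b := (Num.bound _)%:R; lra.
  rewrite E0 measure0 => /(_ measurable0).
  have nF : nonincreasing_seq F.
    move=> m n mn; rewrite subsetEset => x [Ax /= hx]; split => //.
    by rewrite /=; apply: le_trans hx _; rewrite lerN2 ler_nat.
  move=> /(_ nF) cv.
  have : (c%:E <= 0)%E.
    by apply: (cvge_to_ge cv); apply: nearW => n; exact: ltW (H' _).
  by rewrite lee_fin leNgt cpos.
have [t2 Ht2] : exists t, (c%:E < G t)%E.
  apply: contrapT => /forallNP H.
  have H' t : (G t <= c%:E)%E by rewrite leNgt; apply/negP; exact: H.
  pose F n := A `&` [set x | h x <= n%:R].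
  have mF n : measurable (F n) by exact: measurableI.
  have EA : \bigcup_n F n = A.
    apply/seteqP; split => x /=; first by move=> [n _ []].
    move=> Ax; exists (Num.bound `|h x|) => //; split => //=.
    have := archi_boundP (normr_ge0 (h x)).
    have := ler_norm (h x).
    set b := (Num.bound _)%:R; lra.
  have := @nondecreasing_cvg_mu _ _ _ nu F mF.
  rewrite EA => /(_ mA).
  have nF : nondecreasing_seq F.
    move=> m n mn; rewrite subsetEset => x [Ax /= hx]; split => //.
    by apply: le_trans hx _; rewrite ler_nat.
  move=> /(_ nF) cv.
  have : (nu A <= c%:E)%E.
    by apply: (cvge_to_le cv); apply: nearW => n; exact: H'.
  by rewrite leNgt cltA.
pose E := [set t | (G t <= c%:E)%E].
have hsE : has_sup E.
  split; first by exists t1.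
  exists t2 => t Et; rewrite leNgt; apply/negP => t2t.
  have := le_trans (G_mono _ _ (ltW t2t)) Et.
  by rewrite leNgt Ht2.
pose s := sup E.
have Gs_ge : (c%:E <= G s)%E.
  pose F n := A `&` [set x | h x <= s + n.+1%:R^-1].
  have mF n : measurable (F n) by exact: measurableI.
  have := @nonincreasing_cvg_mu _ _ _ nu F (nufinA _ (mF 0%N)) mF.
  have EI : \bigcap_n F n = A `&` [set x | h x <= s].
    apply/seteqP; split => x /=.
      move=> Hx; have [Ax _] := Hx 0%N I; split => //.
      rewrite leNgt; apply/negP => /ltr_add_invr [k hk].
      have [_ /= hx] := Hx k I.
      by move: hk; rewrite ltNge hx.
    move=> [Ax hx] n _; split => //=.
    by apply: (le_trans hx); rewrite lerDl invr_ge0.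
  rewrite EI => /(_ (mLe s)).
  have nF : nonincreasing_seq F.
    move=> m n mn; rewrite subsetEset => x [Ax /= hx]; split => //.
    apply: (le_trans hx); rewrite lerD2l lef_pV2 ?posrE ?ltr0Sn //.
    by rewrite ler_nat.
  move=> /(_ nF) cv.
  apply: (cvge_to_ge cv); apply: nearW => n /=.
  rewrite leNgt; apply/negP => Hn.
  have : s + n.+1%:R^-1 <= s by apply: sup_upper_bound => //; exact: ltW Hn.
  by rewrite leNgt ltrDl invr_gt0 ltr0Sn.
have Ls_le : (nu (A `&` [set x | (h x < s)%R]) <= c%:E)%E.
  pose F n := A `&` [set x | h x <= s - n.+1%:R^-1].
  have mF n : measurable (F n) by exact: measurableI.
  have := @nondecreasing_cvg_mu _ _ _ nu F mF.
  have EU : \bigcup_n F n = A `&` [set x | h x < s].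
    apply/seteqP; split => x /=.
      move=> [n _ [Ax /= hx]]; split => //.
      by apply: (le_lt_trans hx); rewrite ltrBlDr ltrDl invr_gt0 ltr0Sn.
    move=> [Ax /ltr_add_invr [k hk]]; exists k => //; split => //=.
    by rewrite lerBrDr ltW.
  rewrite EU => /(_ (mLt s)).
  have nF : nondecreasing_seq F.
    move=> m n mn; rewrite subsetEset => x [Ax /= hx]; split => //.
    apply: (le_trans hx); rewrite lerD2l lerN2 lef_pV2 ?posrE ?ltr0Sn //.
    by rewrite ler_nat.
  move=> /(_ nF) cv.
  apply: (cvge_to_le cv); apply: nearW => n /=.
  have ep : 0 < n.+1%:R^-1 :> R by rewrite invr_gt0 ltr0Sn.
  have [e Ee He] := sup_adherent ep hsE.
  by apply: le_trans Ee; apply: G_mono; exact: ltW.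
exists (A `&` [set x | h x <= s]); split; first exact: mLe.
split; first by move=> x [].
apply/le_anti; rewrite Gs_ge andbT.
by have := G_eq s; rewrite /G => ->.
Qed.
End nonatomic.

Definition dens d (T : measurableType d) (R : realType) (mu : {measure set T -> \bar R})
  (f : T -> R) (mf : measurable_fun setT f) (f0 : forall x, 0 <= f x) : set T -> \bar R :=
  fun A => (\int[mu]_(x in A) (f x)%:E)%E.
Arguments dens {d T R} mu {f} mf f0.

Section dens_measure.
Context d (T : measurableType d) (R : realType) (mu : {measure set T -> \bar R})
  (f : T -> R) (mf : measurable_fun setT f) (f0 : forall x, 0 <= f x).
Let dens0 : dens mu mf f0 set0 = 0%E.
Proof. exact: integral_set0. Qed.
Let dens_ge0 A : (0 <= dens mu mf f0 A)%E.
Proof. by apply: integral_ge0 => x _; rewrite lee_fin. Qed.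
Let dens_ssa : semi_sigma_additive (dens mu mf f0).
Proof.
apply: semi_sigma_additive_nng_induced; last by move=> x; rewrite lee_fin.
exact/measurable_realfun.measurable_EFinP.
Qed.
HB.instance Definition _ := isMeasure.Build _ _ _ (dens mu mf f0) dens0 dens_ge0 dens_ssa.
End dens_measure.

Lemma ord3_cases (i : 'I_3) : i = H0 \/ i = H1 \/ i = H2.
Proof.
case: i => -[|[|[|k]]] Hi.
- by left; apply: val_inj.
- by right; left; apply: val_inj.
- by right; right; apply: val_inj.
- by [].
Qed.

Lemma key0 (R : realType) (mu : {measure set (0.-tuple R) -> \bar R})
  (p : 'I_3 -> 0.-tuple R -> R) (alpha beta : R) :
  0 < alpha -> 0 < beta -> forall Rg, ~ feasible_ineq mu p alpha beta Rg.
Proof.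
move=> a0 b0 Rg [[mR [disj _]] [h0 h1]].
have ne i j (c : R) : 0 < c -> (c%:E <= PrHH mu p Rg i j)%E -> Rg i !=set0.
  move=> c0 hc; apply/set0P/negP => /eqP E0; move: hc.
  by rewrite /PrHH E0 integral_set0 lee_fin leNgt c0.
have [x0 Hx0] := ne _ _ _ a0 h0.
have [x1 Hx1] := ne _ _ _ b0 h1.
have : (Rg H0 `&` Rg H1) x0 by split => //; rewrite (tuple0 x0) -(tuple0 x1).
by rewrite (disj H0 H1 erefl).
Qed.

Lemma lvl_null (R : realType) (n : nat) (mu : {measure set (n.+1.-tuple R) -> \bar R}) :
  is_lebesgue_measure_N mu ->
  forall t, mu ((fun x : n.+1.-tuple R => tnth x ord0) @^-1` [set t]) = 0%E.
Proof.
move=> leb t.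
pose a (k : nat) (i : 'I_n.+1) : R := if i == ord0 then t else - k%:R.
pose b (k : nat) (i : 'I_n.+1) : R := if i == ord0 then t else k%:R.
pose box k := [set x : n.+1.-tuple R | forall i, a k i <= tnth x i <= b k i].
have box0 k : mu (box k) = 0%E.
  rewrite leb; last first.
    move=> i; rewrite /a /b; case: ifP => // _.
    by rewrite -subr_ge0 opprK -mulr2n mulrn_wge0.
  by rewrite big_ord_recl /a /b eqxx subrr mul0r.
have mbox k : measurable (box k).
  have -> : box k = \bigcap_(i in [set: 'I_n.+1])
      ((fun x : n.+1.-tuple R => tnth x i) @^-1` [set` `[a k i, b k i]]).
    apply/seteqP; split => x /=.
      by move=> H i _; rewrite /= in_itv /=; exact: H.
    by move=> H i; have := H i I; rewrite /= in_itv.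
  apply: fin_bigcap_measurable; first exact: finite_finset.
  move=> i _; rewrite -[X in measurable X]setTI.
  apply: measurable_tnth => //; exact: measurable_itv.
have EU : (fun x : n.+1.-tuple R => tnth x ord0) @^-1` [set t] = \bigcup_k box k.
  apply/seteqP; split => x /=.
    move=> Ht; exists (\max_(i < n.+1) Num.bound `|tnth x i|)%N => //=.
    move=> i; rewrite /a /b; case: ifP => [/eqP ->|_]; first by rewrite Ht lexx.
    have h1 := archi_boundP (normr_ge0 (tnth x i)).
    have h2 : ((Num.bound `|tnth x i|)%:R <= (\max_(i < n.+1) Num.bound `|tnth x i|)%N%:R :> R).
      by rewrite ler_nat; exact: (leq_bigmax_cond (F := fun i => Num.bound `|tnth x i|)).
    have h3 := ler_norm (tnth x i).
    have h4 := lerNnormlW (le_refl `|tnth x i|).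
    move: h1 h2 h3 h4.
    set B := (Num.bound _)%:R; set M := (\max_(_ < _) _)%N%:R => h1 h2 h3 h4.
    apply/andP; split; lra.
  move=> [k _ Hk]; have := Hk ord0; rewrite /a /b eqxx => /andP[h1 h2].
  by apply/le_anti; rewrite h1 h2.
have nd : nondecreasing_seq box.
  move=> k m km; rewrite subsetEset => x /= Hx i; have := Hx i.
  rewrite /a /b; case: ifP => // _ /andP[h1 h2].
  have : (k%:R <= m%:R :> R) by rewrite ler_nat.
  move=> hkm; apply/andP; split; lra.
have cv := @nondecreasing_cvg_mu _ _ _ mu box mbox (bigcupT_measurable _ mbox) nd.
rewrite EU; apply/le_anti; rewrite measure_ge0 andbT.
apply: (cvge_to_le cv); apply: nearW => k /=.
by rewrite box0.
Qed.

Lemma keyS (R : realType) (n : nat) (mu : {measure set (n.+1.-tuple R) -> \bar R})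
  (p : 'I_3 -> n.+1.-tuple R -> R) (alpha beta : R) :
  is_lebesgue_measure_N mu -> (forall j, is_density mu (p j)) ->
  0 < alpha -> 0 < beta ->
  forall Rg, feasible_ineq mu p alpha beta Rg ->
     exists Rg', feasible_eq mu p alpha beta Rg' /\
       (PrHH mu p Rg H2 H2 <= PrHH mu p Rg' H2 H2)%E.
Proof.
move=> leb dns a0 b0 Rg [[mR [disj cov]] [h0 h1]].
have mp j : measurable_fun setT (p j) := (dns j).1.
have p0 j : forall x, 0 <= p j x := (dns j).2.1.
have int1 j := (dns j).2.2.
pose nu j := dens mu (mp j) (p0 j).
pose h := fun x : n.+1.-tuple R => tnth x ord0.
have mh : measurable_fun setT h by exact: measurable_tnth.
have mlvl t : measurable (h @^-1` [set t]).
  by rewrite -[X in measurable X]setTI; apply: mh => //; exact: measurable_set1.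
have nulvl j t : nu j (h @^-1` [set t]) = 0%E.
  apply: null_set_integral => //; last exact: lvl_null.
  apply/measurable_realfun.measurable_EFinP; exact: measurable_funS (mp j).
have nufin j : (nu j setT < +oo)%E.
  by rewrite /nu /dens int1 ltry.
have PrE (Q : 'I_3 -> set (n.+1.-tuple R)) i j : PrHH mu p Q i j = nu j (Q i) := erefl.
have fin j (A : set _) : measurable A -> nu j A \is a fin_num.
  move=> mA; rewrite ge0_fin_numE; last exact: measure_ge0.
  by apply: le_lt_trans (nufin j); apply: le_measure; rewrite ?inE.
rewrite !PrE in h0 h1.
have split_reg (j : 'I_3) (c : R) : 0 < c -> (c%:E <= nu j (Rg j))%E ->
    exists S, measurable S /\ S `<=` Rg j /\ nu j (Rg j `\` S) = c%:E.
  move=> c0 hc.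
  have ha := fineK (fin j _ (mR j)).
  set a := nu j (Rg j) in hc ha *.
  have g1 : 0 <= fine a - c by move: hc; rewrite -ha lee_fin subr_ge0.
  have g2 : ((fine a - c)%:E <= a)%E by rewrite -ha lee_fin; lra.
  have [S [mS [Ss nS]]] := @nonatomic_split _ _ _ (nu j) h mh (nufin j) (nulvl j) _ (mR j)
     (fine a - c) g1 g2.
  exists S; split => //; split => //.
  transitivity (nu j (Rg j) - nu j (Rg j `&` S))%E.
    apply: measureD => //.
    by apply: le_lt_trans (nufin j); apply: le_measure; rewrite ?inE.
  have -> : nu j (Rg j `&` S) = (fine a - c)%:E by rewrite (setIidr Ss); exact: nS.
  have -> : nu j (Rg j) = (fine a)%:E by rewrite ha.
  rewrite -EFinB; congr (_%:E); lra.
have [S0 [mS0 [S0s nS0]]] := split_reg H0 alpha a0 h0.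
have [S1 [mS1 [S1s nS1]]] := split_reg H1 beta b0 h1.
pose Rg' (i : 'I_3) := if i == H0 then Rg H0 `\` S0
  else if i == H1 then Rg H1 `\` S1 else Rg H2 `|` S0 `|` S1.
have E0 : Rg' H0 = Rg H0 `\` S0 := erefl.
have E1 : Rg' H1 = Rg H1 `\` S1 := erefl.
have E2 : Rg' H2 = Rg H2 `|` S0 `|` S1 := erefl.
have dj i j x : i != j -> Rg i x -> Rg j x -> False.
  move=> ij Hi Hj; have : (Rg i `&` Rg j) x by split.
  by rewrite (disj i j ij).
have d01 := dj H0 H1 _ erefl. have d02 := dj H0 H2 _ erefl.
have d12 := dj H1 H2 _ erefl.
exists Rg'; split; last first.
  rewrite !PrE E2; apply: le_measure; rewrite ?inE //.
  - by apply: measurableU => //; apply: measurableU => //; exact: mR.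
  - by move=> x Hx; left; left.
split; last by rewrite !PrE E0 E1.
split.
  move=> i; have [->|[->|->]] := ord3_cases i.
  - by rewrite E0; apply: measurableD => //; exact: mR.
  - by rewrite E1; apply: measurableD => //; exact: mR.
  - by rewrite E2; apply: measurableU => //; apply: measurableU => //; exact: mR.
split.
  have D01 : Rg' H0 `&` Rg' H1 = set0.
    apply/seteqP; split => x //; rewrite E0 E1 => -[[A _] [B _]].
    exact: d01 A B.
  have D02 : Rg' H0 `&` Rg' H2 = set0.
    apply/seteqP; split => x //; rewrite E0 E2 => -[[A nS] [[B|B]|B]].
    - exact: d02 A B.
    - exact: nS B.
    - exact: d01 A (S1s _ B).
  have D12 : Rg' H1 `&` Rg' H2 = set0.
    apply/seteqP; split => x //; rewrite E1 E2 => -[[A nS] [[B|B]|B]].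
    - exact: d12 A B.
    - exact: d01 (S0s _ B) A.
    - exact: nS B.
  move=> i j; have [->|[->|->]] := ord3_cases i; have [->|[->|->]] := ord3_cases j;
    rewrite ?eqxx // => _; by rewrite ?D01 ?D02 ?D12 // setIC ?D01 ?D02 ?D12.
apply/seteqP; split => x // _.
have : (\bigcup_(i in [set: 'I_3]) Rg i) x by rewrite cov.
move=> [i _]; have [->|[->|->]] := ord3_cases i => Hx.
- have [Sx|nSx] := pselect (S0 x).
    by exists H2 => //; rewrite E2; left; right.
  by exists H0 => //; rewrite E0.
- have [Sx|nSx] := pselect (S1 x).
    by exists H2 => //; rewrite E2; right.
  by exists H1 => //; rewrite E1.
- by exists H2 => //; rewrite E2; left; left.
Qed.

Theorem lemma1 (R : realType) (N : nat)
    (mu : {measure set (N.-tuple R) -> \bar R})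
    (p : 'I_3 -> N.-tuple R -> R) (alpha beta : R) :
  is_lebesgue_measure_N mu ->
  (forall j, is_density mu (p j)) ->
  2^-1 < alpha < 1 -> 2^-1 < beta < 1 ->
  (forall Rg, feasible_ineq mu p alpha beta Rg ->
     exists Rg', feasible_eq mu p alpha beta Rg' /\
       (PrHH mu p Rg H2 H2 <= PrHH mu p Rg' H2 H2)%E) /\
  ereal_sup [set PrHH mu p Rg H2 H2 | Rg in feasible_ineq mu p alpha beta]
  = ereal_sup [set PrHH mu p Rg H2 H2 | Rg in feasible_eq mu p alpha beta].
Proof.
move=> leb dns /andP[ha _] /andP[hb _].
have a0 : 0 < alpha by apply: lt_trans ha; rewrite invr_gt0.
have b0 : 0 < beta by apply: lt_trans hb; rewrite invr_gt0.
have key : forall Rg, feasible_ineq mu p alpha beta Rg ->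
     exists Rg', feasible_eq mu p alpha beta Rg' /\
       (PrHH mu p Rg H2 H2 <= PrHH mu p Rg' H2 H2)%E.
  move: mu p leb dns; case: N => [|n] mu p leb dns Rg HRg.
    by exfalso; exact: (@key0 _ _ _ _ _ a0 b0 Rg HRg).
  exact: keyS.
split => //.
apply/le_anti/andP; split.
  apply: ge_ereal_sup => _ [Rg HRg <-].
  have [Rg' [HRg' le']] := key Rg HRg.
  apply: le_trans le' _; apply: ereal_sup_ubound; by exists Rg'.
apply: le_ereal_sup; apply: image_subset => Rg [dr [e0 e1]].
by split => //; rewrite e0 e1.
Qed.
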